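(* Let $\rho:\mathcal{M}_2\to \mathrm{GL}(5,\mathbb{Z}[t,t^{-1}])$ be the Jones representation of the mapping class group $\mathcal{M}_2$ of a closed oriented surface of genus $2$, fix $\varepsilon\in\{1,-1\}$, and let $\varphi:\mathcal{M}_2\to\mathrm{GL}(5,\mathbb{Q}[[h]])$ be obtained from $\rho$ by the substitution $t=\varepsilon e^{h}$. For $k\ge1$ let $\mathcal{F}_k=\{x\in\mathcal{I}_2:\ \varphi(x)\equiv I\pmod{h^k}\}$, where $\mathcal{I}_2$ is the Torelli subgroup, and let $\mathcal{G}_k^{\mathbb{Q}}\mathcal{F}=(\mathcal{F}_k/\mathcal{F}_{k+1})\otimes\mathbb{Q}$, with the module structure induced by conjugation by $\mathcal{M}_2$: a module over $\mathrm{Sp}(4,\mathbb{Q})$ when $\varepsilon=-1$ and over the symmetric group $\mathfrak{S}_6$ when $\varepsilon=1$. Then for every $k\ge1$, $\mathcal{G}_k^{\mathbb{Q}}\mathcal{F}$ does not contain the trivial $1$-dimensional representation as a summand (i.e. $\Gamma_{0,0}$ in the case $\varepsilon=-1$, resp. $[6]$ in the case $\varepsilon=1$, does not occur).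
   Context: The Jones representation $\rho$ is the $5$-dimensional representation of $\mathcal{M}_2$ constructed by V. F. R. Jones (via the hyperelliptic description of $\mathcal{M}_2$ and the Iwahori–Hecke algebra representation of the braid group $B_6$ attached to the rectangular Young diagram $(3,3)$). $I$ is the $5\times5$ identity matrix and $\mathcal{I}_2$ the Torelli subgroup of $\mathcal{M}_2$. The groups $\mathcal{F}_k/\mathcal{F}_{k+1}$ are free abelian of finite rank; they embed $\mathcal{M}_2$-equivariantly into $M(5,\mathbb{Q})$ (with $\mathcal{M}_2$ acting by conjugation via $\varphi$ mod $h$) through the map $x\mapsto\Delta_k(x)$ defined by $\varphi(x)\equiv I+h^k\Delta_k(x)\pmod{h^{k+1}}$. As a module, $M(5,\mathbb{Q})$ decomposes as $\Gamma_{0,2}\oplus\Gamma_{2,0}\oplus\Gamma_{0,0}$ over $\mathrm{Sp}(4,\mathbb{Q})$ (case $\varepsilon=-1$) and as $[6]\oplus[4,2]\oplus[2^3]\oplus[3,1^3]$ over $\mathfrak{S}_6$ (case $\varepsilon=1$), the trivial summand being the scalar matrices. *)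

(* Defs.v *)
From HB Require Import structures.
From mathcomp Require Import all_boot all_order all_algebra.
Set Implicit Arguments. Unset Strict Implicit. Unset Printing Implicit Defensive.
Import Order.TTheory GRing.Theory Num.Theory.
Local Open Scope ring_scope.

(* Elements of the genus-2 mapping class group M_2, via the hyperelliptic     *)
(* (Birman-Hilden) description: M_2 is generated by sigma_1..sigma_5 (the     *)
(* Dehn twists about a chain c_1..c_5).  An element is represented by a word  *)
(* in the letters sigma_i^{+1} (true) and sigma_i^{-1} (false).  All the      *)
(* objects below (rho, phi, the symplectic action) are homomorphisms from the *)
(* free group that kill the defining relations of M_2, so they are well       *)
(* defined on M_2; working with words is therefore harmless.                  *)
Definition letter := ('I_5 * bool)%type.
Definition word := seq letter.

Definition winv (w : word) : word := rev (map (fun l : letter => (l.1, ~~ l.2)) w).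

(* The Jones representation rho (Young diagram (3,3)).                        *)
(* Iwahori-Hecke generator g_i with (g_i - q)(g_i + 1) = 0 acts on the        *)
(* 5-dimensional (3,3)-module as  g_i = q + U_i, where U_i is the             *)
(* Temperley-Lieb generator in the (rescaled) cup-diagram basis below.        *)
(* Jones' normalisation: q = t^5 and rho(sigma_i) = t^{-3} g_i, so that the   *)
(* relations (s1..s5)^6 = 1, iota^2 = 1, [iota, s1] = 1 of M_2 hold and       *)
(* det rho(sigma_i) = 1; then rho(sigma_i)^{-1} = t^{-2} (1 + U_i).           *)
Section Jones.
Variable R : comNzRingType.

Definition jU_entry (q : R) (i a b : nat) : R :=
  match i, a, b with
  | 0,0,0 | 0,1,1 | 1,2,2 | 1,3,3 | 2,0,0 | 2,4,4
  | 3,1,1 | 3,3,3 | 4,0,0 | 4,2,2 => - (1 + q)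
  | 0,0,2 | 0,0,4 | 1,3,1 | 1,3,4 | 2,0,1 | 2,0,2
  | 3,3,2 | 3,3,4 | 4,0,1 | 4,0,4 => q
  | 0,1,3 | 1,2,0 | 2,4,3 | 3,1,0 | 4,2,3 => 1
  | _,_,_ => 0
  end.

Definition jU (q : R) (i : 'I_5) : 'M[R]_5 :=
  \matrix_(a < 5, b < 5) jU_entry q i a b.

(* image of the letter sigma_i^{+-1}, given t and its inverse ti *)
Definition jones_gen (t ti : R) (l : letter) : 'M[R]_5 :=
  if l.2 then ti ^+ 3 *: ((t ^+ 5)%:M + jU (t ^+ 5) l.1)
  else ti ^+ 2 *: (1%:M + jU (t ^+ 5) l.1).

Definition jones_word (t ti : R) (w : word) : 'M[R]_5 :=
  foldr (fun l A => jones_gen t ti l *m A) 1%:M w.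
End Jones.

(* phi = rho with t = eps * e^h, in Q[[h]].  We compute modulo h^N: the       *)
(* series e^{h}, e^{-h} are truncated to degree < N (truncation mod h^N is a  *)
(* ring morphism), and only coefficients of degree < N of the resulting       *)
(* polynomial matrix are ever used.                                           *)
Definition expS (N : nat) (c : rat) : {poly rat} :=
  \poly_(j < N) (c ^+ j / (j`!)%:R).

(* phiN eps N w : a polynomial matrix whose coefficients of degree < N are    *)
(* those of phi(w) in Q[[h]]  (note eps^{-1} = eps).                          *)
Definition phiN (eps : rat) (N : nat) (w : word) : 'M[{poly rat}]_5 :=
  jones_word (eps%:P * expS N 1) (eps%:P * expS N (-1)) w.

(* phi mod h, i.e. rho at t = eps *)
Definition rho_eps (eps : rat) (w : word) : 'M[rat]_5 := jones_word eps eps w.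

(* Symplectic basis a1,b1,a2,b2 with omega(a_i,b_i) = 1; the chain curves     *)
(* have classes c1 = a1, c2 = b1, c3 = a2 - a1, c4 = b2, c5 = a2, and the     *)
(* Dehn twist about c acts by x |-> x + omega(x,c) c.                         *)
Definition omegaJ : 'M[int]_4 :=
  \matrix_(a < 4, b < 4)
    (if (a == 0 :> nat) && (b == 1 :> nat) then 1
     else if (a == 1 :> nat) && (b == 0 :> nat) then -1
     else if (a == 2 :> nat) && (b == 3 :> nat) then 1
     else if (a == 3 :> nat) && (b == 2 :> nat) then -1 else 0).

Definition chain_entry (i a : nat) : int :=
  match i, a with
  | 0,0 => 1
  | 1,1 => 1
  | 2,0 => -1
  | 2,2 => 1
  | 3,3 => 1
  | 4,2 => 1
  | _,_ => 0
  end.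

Definition chain_class (i : 'I_5) : 'cV[int]_4 := \col_(a < 4) chain_entry i a.

Definition symp_gen (l : letter) : 'M[int]_4 :=
  1%:M + (if l.2 then 1 else -1) *:
           (chain_class l.1 *m (chain_class l.1)^T *m omegaJ^T).

Definition symp_word (w : word) : 'M[int]_4 :=
  foldr (fun l A => symp_gen l *m A) 1%:M w.

Definition torelli (w : word) : Prop := symp_word w = 1%:M.

Definition inF (eps : rat) (k : nat) (w : word) : Prop :=
  torelli w /\
  forall (a b : 'I_5) (j : nat), (j < k)%N ->
    (phiN eps k w a b)`_j = ((1%:M : 'M[{poly rat}]_5) a b)`_j.

(* Delta_k(x): phi(x) = I + h^k Delta_k(x) mod h^(k+1)  (k >= 1) *)
Definition Delta (eps : rat) (k : nat) (w : word) : 'M[rat]_5 :=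
  \matrix_(a < 5, b < 5) (phiN eps k.+1 w a b)`_k.

(* G_k^Q F = (F_k/F_{k+1}) (x) Q, realised (via the embedding Delta_k) as the *)
(* Q-span of Delta_k(F_k) inside M(5,Q).                                      *)
Definition GkF (eps : rat) (k : nat) (A : 'M[rat]_5) : Prop :=
  exists (n : nat) (c : 'I_n -> rat) (x : 'I_n -> word),
    (forall i, inF eps k (x i)) /\ A = \sum_(i < n) c i *: Delta eps k (x i).

(* action of g in M_2 (induced by conjugation x |-> g x g^{-1}) *)
Definition act (eps : rat) (g : word) (A : 'M[rat]_5) : 'M[rat]_5 :=
  rho_eps eps g *m A *m rho_eps eps (winv g).

Definition is_subspace (W : 'M[rat]_5 -> Prop) : Prop :=
  W 0 /\ (forall X Y, W X -> W Y -> W (X + Y)) /\ (forall (c : rat) X, W X -> W (c *: X)).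

Definition has_trivial_summand (eps : rat) (V : 'M[rat]_5 -> Prop) : Prop :=
  exists A : 'M[rat]_5,
    [/\ A != 0, V A, (forall g, act eps g A = A) &
     exists W : 'M[rat]_5 -> Prop,
       [/\ is_subspace W, (forall X, W X -> V X),
           (forall g X, W X -> W (act eps g X)), ~ W A &
           (forall X, V X -> exists c : rat, W (X - c *: A))]].

(* Main.v *)
Require Import Defs.
From HB Require Import structures.
From mathcomp Require Import all_boot all_order all_algebra.
From mathcomp Require Import ring lra zify fingroup perm.
Set Implicit Arguments. Unset Strict Implicit. Unset Printing Implicit Defensive.
Import Order.TTheory GRing.Theory Num.Theory.
Local Open Scope ring_scope.


Lemma det_row_diag (R : comNzRingType) n (A : 'M[R]_n.+1) i :
  (forall j, j != i -> A i j = 0) -> \det A = A i i * \det (row' i (col' i A)).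
Proof.
move=> H; rewrite (expand_det_row _ i) (bigD1 i) //= big1 ?addr0.
  by rewrite /cofactor addnn -mul2n exprM expr2 mulrNN mulr1 expr1n mul1r.
by move=> j /H ->; rewrite mul0r.
Qed.

Ltac dstep n k :=
  rewrite (@det_row_diag _ _ _ (@Ordinal n k isT));
  [| let j := fresh in move=> j; case: j => [[|[|[|[|[|//]]]]] ?] //= _; rewrite !mxE /= ?mxE /=; ring].

Lemma det_jU1 (R : comNzRingType) (q : R) i : \det (q%:M + jU q i) = q ^+ 3.
Proof.
case: i => [[|[|[|[|[|//]]]]] ?].
- dstep 5%N 4%N. dstep 4%N 3%N. dstep 3%N 2%N. dstep 2%N 1%N. dstep 1%N 0%N.
  rewrite det_mx00 !mxE /= ?mxE /=. ring.
- dstep 5%N 4%N. dstep 4%N 1%N. dstep 3%N 0%N. dstep 2%N 1%N. dstep 1%N 0%N.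
  rewrite det_mx00 !mxE /= ?mxE /=. ring.
- dstep 5%N 3%N. dstep 4%N 2%N. dstep 3%N 1%N. dstep 2%N 1%N. dstep 1%N 0%N.
  rewrite det_mx00 !mxE /= ?mxE /=. ring.
- dstep 5%N 4%N. dstep 4%N 2%N. dstep 3%N 0%N. dstep 2%N 1%N. dstep 1%N 0%N.
  rewrite det_mx00 !mxE /= ?mxE /=. ring.
- dstep 5%N 4%N. dstep 4%N 3%N. dstep 3%N 1%N. dstep 2%N 1%N. dstep 1%N 0%N.
  rewrite det_mx00 !mxE /= ?mxE /=. ring.
Qed.

Lemma det_jU2 (R : comNzRingType) (q : R) i : \det (1%:M + jU q i) = q ^+ 2.
Proof.
case: i => [[|[|[|[|[|//]]]]] ?].
- dstep 5%N 4%N. dstep 4%N 3%N. dstep 3%N 2%N. dstep 2%N 1%N. dstep 1%N 0%N.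
  rewrite det_mx00 !mxE /= ?mxE /=. ring.
- dstep 5%N 4%N. dstep 4%N 1%N. dstep 3%N 0%N. dstep 2%N 1%N. dstep 1%N 0%N.
  rewrite det_mx00 !mxE /= ?mxE /=. ring.
- dstep 5%N 3%N. dstep 4%N 2%N. dstep 3%N 1%N. dstep 2%N 1%N. dstep 1%N 0%N.
  rewrite det_mx00 !mxE /= ?mxE /=. ring.
- dstep 5%N 4%N. dstep 4%N 2%N. dstep 3%N 0%N. dstep 2%N 1%N. dstep 1%N 0%N.
  rewrite det_mx00 !mxE /= ?mxE /=. ring.
- dstep 5%N 4%N. dstep 4%N 3%N. dstep 3%N 1%N. dstep 2%N 1%N. dstep 1%N 0%N.
  rewrite det_mx00 !mxE /= ?mxE /=. ring.
Qed.


Definition lowz (N : nat) (p : {poly rat}) := forall j, (j < N)%N -> p`_j = 0.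
Definition pcong N (p q : {poly rat}) := lowz N (p - q).

Lemma lowz0 N : lowz N 0. Proof. by move=> j _; rewrite coef0. Qed.
Lemma lowzD N p q : lowz N p -> lowz N q -> lowz N (p + q).
Proof. by move=> hp hq j hj; rewrite coefD hp // hq // addr0. Qed.
Lemma lowzN N p : lowz N p -> lowz N (- p).
Proof. by move=> hp j hj; rewrite coefN hp // oppr0. Qed.
Lemma lowzMM a b p q : lowz a p -> lowz b q -> lowz (a + b) (p * q).
Proof.
move=> hp hq j hj; rewrite coefM big1 // => i _.
have [hi|hi] := ltnP i a; first by rewrite hp // mul0r.
rewrite hq ?mulr0 //; have := ltn_ord i; lia.
Qed.
Lemma lowzMl N p q : lowz N p -> lowz N (p * q).
Proof. by move=> hp; rewrite -[N]addn0; apply: lowzMM => // j. Qed.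
Lemma lowzMr N p q : lowz N q -> lowz N (p * q).
Proof. by move=> hq; rewrite mulrC; apply: lowzMl. Qed.
Lemma lowz_le N M p : (N <= M)%N -> lowz M p -> lowz N p.
Proof. by move=> hNM hp j hj; apply: hp; apply: leq_trans hNM. Qed.
Lemma lowz_sum N I (r : seq I) (F : I -> {poly rat}) :
  (forall i, lowz N (F i)) -> lowz N (\sum_(i <- r) F i).
Proof.
move=> H; elim: r => [|x r IH]; first by rewrite big_nil; apply: lowz0.
by rewrite big_cons; apply: lowzD.
Qed.

Lemma pcong_refl N p : pcong N p p. Proof. by rewrite /pcong subrr; apply: lowz0. Qed.
Lemma pcong_sym N p q : pcong N p q -> pcong N q p.
Proof. by rewrite /pcong -opprB => /lowzN; rewrite opprK. Qed.
Lemma pcong_trans N p q r : pcong N p q -> pcong N q r -> pcong N p r.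
Proof. by move=> h1 h2; have := lowzD h1 h2; rewrite /pcong addrA subrK. Qed.
Lemma pcongD N p q p' q' : pcong N p p' -> pcong N q q' -> pcong N (p + q) (p' + q').
Proof. by move=> h1 h2; have := lowzD h1 h2; rewrite /pcong; congr lowz; ring. Qed.
Lemma pcongM N p q p' q' : pcong N p p' -> pcong N q q' -> pcong N (p * q) (p' * q').
Proof.
move=> h1 h2; have := lowzD (lowzMl q h1) (lowzMr p' h2).
by rewrite /pcong; congr lowz; ring.
Qed.
Lemma pcongX N p p' m : pcong N p p' -> pcong N (p ^+ m) (p' ^+ m).
Proof.
move=> h; elim: m => [|m IH]; first by rewrite !expr0; apply: pcong_refl.
by rewrite !exprS; apply: pcongM.
Qed.
Lemma pcongMc N c p p' : pcong N p p' -> pcong N (c * p) (c * p').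
Proof. by move=> h; apply: pcongM => //; apply: pcong_refl. Qed.

Definition mcong N (A B : 'M[{poly rat}]_5) := forall a b, pcong N (A a b) (B a b).

Lemma mcong_refl N A : mcong N A A. Proof. by move=> a b; apply: pcong_refl. Qed.
Lemma mcongM N A B A' B' : mcong N A A' -> mcong N B B' -> mcong N (A *m B) (A' *m B').
Proof.
move=> h1 h2 a b; rewrite !mxE /pcong -sumrB; apply: lowz_sum => i.
by have := pcongM (h1 a i) (h2 i b).
Qed.
Lemma mcongD N A B A' B' : mcong N A A' -> mcong N B B' -> mcong N (A + B) (A' + B').
Proof. by move=> h1 h2 a b; rewrite !mxE; apply: pcongD. Qed.
Lemma mcongZ N c c' A A' : pcong N c c' -> mcong N A A' -> mcong N (c *: A) (c' *: A').
Proof. by move=> h1 h2 a b; rewrite !mxE; apply: pcongM. Qed.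
Lemma mcong_scalar N c c' : pcong N c c' -> mcong N c%:M c'%:M.
Proof.
move=> h a b; rewrite !mxE; case: (a == b) => /=; rewrite ?mulr1n ?mulr0n //.
exact: pcong_refl.
Qed.

Lemma jU_entry_lin (R : comNzRingType) (q q' : R) i a b :
  jU_entry q i a b - jU_entry q' i a b = (jU_entry 1 i a b - jU_entry 0 i a b) * (q - q').
Proof.
case: i => [|[|[|[|[|i]]]]]; case: a => [|[|[|[|[|a]]]]]; case: b => [|[|[|[|[|b]]]]] /=; ring.
Qed.

Lemma mcong_jU N q q' i : pcong N q q' -> mcong N (jU q i) (jU q' i).
Proof. by move=> h a b; rewrite !mxE /pcong jU_entry_lin; apply: lowzMr. Qed.

Lemma mcong_word N t ti t' ti' w : pcong N t t' -> pcong N ti ti' ->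
  mcong N (jones_word t ti w) (jones_word t' ti' w).
Proof.
move=> ht hti; elim: w => [|l w IH] /=; first exact: mcong_refl.
apply: mcongM => //; rewrite /jones_gen; case: l.2.
  apply: mcongZ; first exact: pcongX.
  by apply: mcongD; [apply: mcong_scalar|apply: mcong_jU]; apply: pcongX.
apply: mcongZ; first exact: pcongX.
by apply: mcongD; [apply: mcong_refl|apply: mcong_jU; apply: pcongX].
Qed.



Lemma det_word (R : comNzRingType) (t ti : R) w :
  exists m, \det (jones_word t ti w) = (t * ti) ^+ m.
Proof.
elim: w => [|l w [m IH]] /=; first by exists 0%N; rewrite det1 expr0.
rewrite det_mulmx IH /jones_gen; case: l.2.
  exists (15 + m)%N; rewrite detZ det_jU1 exprD; ring.
exists (10 + m)%N; rewrite detZ det_jU2 exprD; ring.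

Qed.

Lemma prod_cong k I (r : seq I) (x : I -> {poly rat}) :
  (forall i, pcong k (x i) 1) ->
  pcong (k + k) (\prod_(i <- r) x i) (1 + \sum_(i <- r) (x i - 1)) /\
  pcong k (\prod_(i <- r) x i) 1.
Proof.
move=> H; elim: r => [|a r [IH1 IH2]].
  by rewrite !big_nil addr0; split; apply: pcong_refl.
rewrite !big_cons; split; last first.
  by have := pcongM (H a) IH2; rewrite mulr1.
have := lowzD IH1 (lowzMM (H a) IH2).
rewrite /pcong; congr lowz; ring.

Qed.

Lemma det_cong k (M : 'M[{poly rat}]_5) : mcong k M 1 ->
  pcong (k + k) (\det M) (1 + \sum_a (M a a - 1)).
Proof.
move=> hM.
have hoff : forall a b, a != b -> lowz k (M a b).
  move=> a b hab; have := hM a b; rewrite /pcong mxE (negbTE hab) mulr0n subr0 //.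
rewrite /determinant (bigD1 (1%g : {perm 'I_5})) //= odd_perm1 expr0 mul1r.
rewrite /pcong addrAC; apply: lowzD; last first.
  apply: (big_ind (lowz (k + k))); [exact: lowz0| by move=> ? ?; apply: lowzD|].
  move=> s hs.
  have [i hi] : exists i, s i != i.
    apply/existsP; apply: contraR hs => /existsPn h; apply/eqP/permP => i.
    by rewrite perm1; apply/eqP; have := h i; rewrite negbK.
  have hj : s (s i) != s i by apply: contra hi => /eqP /perm_inj ->.
  apply: lowzMr; rewrite (bigD1 i) //= (bigD1 (s i)) //=.
  rewrite mulrA; apply: lowzMl; apply: lowzMM; apply: hoff => //; by rewrite eq_sym.
have hd : forall i, pcong k (M i ((1%g : {perm 'I_5}) i)) 1.
  move=> i; rewrite perm1; have := hM i i; by rewrite mxE eqxx mulr1n.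
have [h1 _] := @prod_cong k _ (index_enum 'I_5) (fun i => M i ((1%g : {perm 'I_5}) i)) hd.
by move: h1; rewrite /pcong; under [X in _ - (1 + X)]eq_bigr do rewrite perm1.
Qed.



Definition o0 : 'I_5 := @Ordinal 5 0 isT.
Definition o1 : 'I_5 := @Ordinal 5 1 isT.
Definition o2 : 'I_5 := @Ordinal 5 2 isT.
Definition o3 : 'I_5 := @Ordinal 5 3 isT.
Definition o4 : 'I_5 := @Ordinal 5 4 isT.

Lemma ord5 (a : 'I_5) : a = o0 \/ a = o1 \/ a = o2 \/ a = o3 \/ a = o4.
Proof.
case: a => [[|[|[|[|[|//]]]]] ?]; 
 [left|right;left|right;right;left|right;right;right;left|right;right;right;right]; exact: val_inj.
Qed.

Lemma sum5 (R : nmodType) (F : 'I_5 -> R) : \sum_c F c = F o0 + F o1 + F o2 + F o3 + F o4.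
Proof.
rewrite !big_ord_recr big_ord0 /= add0r.
by do !congr (_ + _); congr F; apply: val_inj.
Qed.

Lemma commut_scalar (q : rat) (A : 'M[rat]_5) : q = 1 \/ q = -1 ->
  (forall i, jU q i *m A = A *m jU q i) -> A = (A o0 o0)%:M.
Proof.
move=> hq H.
have E : forall i a b, (jU q i *m A) a b = (A *m jU q i) a b by move=> i a b; rewrite H.
have e000 := E o0 o0 o0; rewrite !mxE !sum5 !mxE /= ?mul0r ?mulr0 ?add0r ?addr0 ?mul1r ?mulr1 in e000.
have e001 := E o0 o0 o1; rewrite !mxE !sum5 !mxE /= ?mul0r ?mulr0 ?add0r ?addr0 ?mul1r ?mulr1 in e001.
have e002 := E o0 o0 o2; rewrite !mxE !sum5 !mxE /= ?mul0r ?mulr0 ?add0r ?addr0 ?mul1r ?mulr1 in e002.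
have e003 := E o0 o0 o3; rewrite !mxE !sum5 !mxE /= ?mul0r ?mulr0 ?add0r ?addr0 ?mul1r ?mulr1 in e003.
have e004 := E o0 o0 o4; rewrite !mxE !sum5 !mxE /= ?mul0r ?mulr0 ?add0r ?addr0 ?mul1r ?mulr1 in e004.
have e010 := E o0 o1 o0; rewrite !mxE !sum5 !mxE /= ?mul0r ?mulr0 ?add0r ?addr0 ?mul1r ?mulr1 in e010.
have e011 := E o0 o1 o1; rewrite !mxE !sum5 !mxE /= ?mul0r ?mulr0 ?add0r ?addr0 ?mul1r ?mulr1 in e011.
have e012 := E o0 o1 o2; rewrite !mxE !sum5 !mxE /= ?mul0r ?mulr0 ?add0r ?addr0 ?mul1r ?mulr1 in e012.
have e013 := E o0 o1 o3; rewrite !mxE !sum5 !mxE /= ?mul0r ?mulr0 ?add0r ?addr0 ?mul1r ?mulr1 in e013.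
have e014 := E o0 o1 o4; rewrite !mxE !sum5 !mxE /= ?mul0r ?mulr0 ?add0r ?addr0 ?mul1r ?mulr1 in e014.
have e020 := E o0 o2 o0; rewrite !mxE !sum5 !mxE /= ?mul0r ?mulr0 ?add0r ?addr0 ?mul1r ?mulr1 in e020.
have e021 := E o0 o2 o1; rewrite !mxE !sum5 !mxE /= ?mul0r ?mulr0 ?add0r ?addr0 ?mul1r ?mulr1 in e021.
have e022 := E o0 o2 o2; rewrite !mxE !sum5 !mxE /= ?mul0r ?mulr0 ?add0r ?addr0 ?mul1r ?mulr1 in e022.
have e023 := E o0 o2 o3; rewrite !mxE !sum5 !mxE /= ?mul0r ?mulr0 ?add0r ?addr0 ?mul1r ?mulr1 in e023.
have e024 := E o0 o2 o4; rewrite !mxE !sum5 !mxE /= ?mul0r ?mulr0 ?add0r ?addr0 ?mul1r ?mulr1 in e024.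
have e030 := E o0 o3 o0; rewrite !mxE !sum5 !mxE /= ?mul0r ?mulr0 ?add0r ?addr0 ?mul1r ?mulr1 in e030.
have e031 := E o0 o3 o1; rewrite !mxE !sum5 !mxE /= ?mul0r ?mulr0 ?add0r ?addr0 ?mul1r ?mulr1 in e031.
have e032 := E o0 o3 o2; rewrite !mxE !sum5 !mxE /= ?mul0r ?mulr0 ?add0r ?addr0 ?mul1r ?mulr1 in e032.
have e033 := E o0 o3 o3; rewrite !mxE !sum5 !mxE /= ?mul0r ?mulr0 ?add0r ?addr0 ?mul1r ?mulr1 in e033.
have e034 := E o0 o3 o4; rewrite !mxE !sum5 !mxE /= ?mul0r ?mulr0 ?add0r ?addr0 ?mul1r ?mulr1 in e034.
have e040 := E o0 o4 o0; rewrite !mxE !sum5 !mxE /= ?mul0r ?mulr0 ?add0r ?addr0 ?mul1r ?mulr1 in e040.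
have e041 := E o0 o4 o1; rewrite !mxE !sum5 !mxE /= ?mul0r ?mulr0 ?add0r ?addr0 ?mul1r ?mulr1 in e041.
have e042 := E o0 o4 o2; rewrite !mxE !sum5 !mxE /= ?mul0r ?mulr0 ?add0r ?addr0 ?mul1r ?mulr1 in e042.
have e043 := E o0 o4 o3; rewrite !mxE !sum5 !mxE /= ?mul0r ?mulr0 ?add0r ?addr0 ?mul1r ?mulr1 in e043.
have e044 := E o0 o4 o4; rewrite !mxE !sum5 !mxE /= ?mul0r ?mulr0 ?add0r ?addr0 ?mul1r ?mulr1 in e044.
have e100 := E o1 o0 o0; rewrite !mxE !sum5 !mxE /= ?mul0r ?mulr0 ?add0r ?addr0 ?mul1r ?mulr1 in e100.
have e101 := E o1 o0 o1; rewrite !mxE !sum5 !mxE /= ?mul0r ?mulr0 ?add0r ?addr0 ?mul1r ?mulr1 in e101.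
have e102 := E o1 o0 o2; rewrite !mxE !sum5 !mxE /= ?mul0r ?mulr0 ?add0r ?addr0 ?mul1r ?mulr1 in e102.
have e103 := E o1 o0 o3; rewrite !mxE !sum5 !mxE /= ?mul0r ?mulr0 ?add0r ?addr0 ?mul1r ?mulr1 in e103.
have e104 := E o1 o0 o4; rewrite !mxE !sum5 !mxE /= ?mul0r ?mulr0 ?add0r ?addr0 ?mul1r ?mulr1 in e104.
have e110 := E o1 o1 o0; rewrite !mxE !sum5 !mxE /= ?mul0r ?mulr0 ?add0r ?addr0 ?mul1r ?mulr1 in e110.
have e111 := E o1 o1 o1; rewrite !mxE !sum5 !mxE /= ?mul0r ?mulr0 ?add0r ?addr0 ?mul1r ?mulr1 in e111.
have e112 := E o1 o1 o2; rewrite !mxE !sum5 !mxE /= ?mul0r ?mulr0 ?add0r ?addr0 ?mul1r ?mulr1 in e112.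
have e113 := E o1 o1 o3; rewrite !mxE !sum5 !mxE /= ?mul0r ?mulr0 ?add0r ?addr0 ?mul1r ?mulr1 in e113.
have e114 := E o1 o1 o4; rewrite !mxE !sum5 !mxE /= ?mul0r ?mulr0 ?add0r ?addr0 ?mul1r ?mulr1 in e114.
have e120 := E o1 o2 o0; rewrite !mxE !sum5 !mxE /= ?mul0r ?mulr0 ?add0r ?addr0 ?mul1r ?mulr1 in e120.
have e121 := E o1 o2 o1; rewrite !mxE !sum5 !mxE /= ?mul0r ?mulr0 ?add0r ?addr0 ?mul1r ?mulr1 in e121.
have e122 := E o1 o2 o2; rewrite !mxE !sum5 !mxE /= ?mul0r ?mulr0 ?add0r ?addr0 ?mul1r ?mulr1 in e122.
have e123 := E o1 o2 o3; rewrite !mxE !sum5 !mxE /= ?mul0r ?mulr0 ?add0r ?addr0 ?mul1r ?mulr1 in e123.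
have e124 := E o1 o2 o4; rewrite !mxE !sum5 !mxE /= ?mul0r ?mulr0 ?add0r ?addr0 ?mul1r ?mulr1 in e124.
have e130 := E o1 o3 o0; rewrite !mxE !sum5 !mxE /= ?mul0r ?mulr0 ?add0r ?addr0 ?mul1r ?mulr1 in e130.
have e131 := E o1 o3 o1; rewrite !mxE !sum5 !mxE /= ?mul0r ?mulr0 ?add0r ?addr0 ?mul1r ?mulr1 in e131.
have e132 := E o1 o3 o2; rewrite !mxE !sum5 !mxE /= ?mul0r ?mulr0 ?add0r ?addr0 ?mul1r ?mulr1 in e132.
have e133 := E o1 o3 o3; rewrite !mxE !sum5 !mxE /= ?mul0r ?mulr0 ?add0r ?addr0 ?mul1r ?mulr1 in e133.
have e134 := E o1 o3 o4; rewrite !mxE !sum5 !mxE /= ?mul0r ?mulr0 ?add0r ?addr0 ?mul1r ?mulr1 in e134.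
have e140 := E o1 o4 o0; rewrite !mxE !sum5 !mxE /= ?mul0r ?mulr0 ?add0r ?addr0 ?mul1r ?mulr1 in e140.
have e141 := E o1 o4 o1; rewrite !mxE !sum5 !mxE /= ?mul0r ?mulr0 ?add0r ?addr0 ?mul1r ?mulr1 in e141.
have e142 := E o1 o4 o2; rewrite !mxE !sum5 !mxE /= ?mul0r ?mulr0 ?add0r ?addr0 ?mul1r ?mulr1 in e142.
have e143 := E o1 o4 o3; rewrite !mxE !sum5 !mxE /= ?mul0r ?mulr0 ?add0r ?addr0 ?mul1r ?mulr1 in e143.
have e144 := E o1 o4 o4; rewrite !mxE !sum5 !mxE /= ?mul0r ?mulr0 ?add0r ?addr0 ?mul1r ?mulr1 in e144.
have e200 := E o2 o0 o0; rewrite !mxE !sum5 !mxE /= ?mul0r ?mulr0 ?add0r ?addr0 ?mul1r ?mulr1 in e200.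
have e201 := E o2 o0 o1; rewrite !mxE !sum5 !mxE /= ?mul0r ?mulr0 ?add0r ?addr0 ?mul1r ?mulr1 in e201.
have e202 := E o2 o0 o2; rewrite !mxE !sum5 !mxE /= ?mul0r ?mulr0 ?add0r ?addr0 ?mul1r ?mulr1 in e202.
have e203 := E o2 o0 o3; rewrite !mxE !sum5 !mxE /= ?mul0r ?mulr0 ?add0r ?addr0 ?mul1r ?mulr1 in e203.
have e204 := E o2 o0 o4; rewrite !mxE !sum5 !mxE /= ?mul0r ?mulr0 ?add0r ?addr0 ?mul1r ?mulr1 in e204.
have e210 := E o2 o1 o0; rewrite !mxE !sum5 !mxE /= ?mul0r ?mulr0 ?add0r ?addr0 ?mul1r ?mulr1 in e210.
have e211 := E o2 o1 o1; rewrite !mxE !sum5 !mxE /= ?mul0r ?mulr0 ?add0r ?addr0 ?mul1r ?mulr1 in e211.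
have e212 := E o2 o1 o2; rewrite !mxE !sum5 !mxE /= ?mul0r ?mulr0 ?add0r ?addr0 ?mul1r ?mulr1 in e212.
have e213 := E o2 o1 o3; rewrite !mxE !sum5 !mxE /= ?mul0r ?mulr0 ?add0r ?addr0 ?mul1r ?mulr1 in e213.
have e214 := E o2 o1 o4; rewrite !mxE !sum5 !mxE /= ?mul0r ?mulr0 ?add0r ?addr0 ?mul1r ?mulr1 in e214.
have e220 := E o2 o2 o0; rewrite !mxE !sum5 !mxE /= ?mul0r ?mulr0 ?add0r ?addr0 ?mul1r ?mulr1 in e220.
have e221 := E o2 o2 o1; rewrite !mxE !sum5 !mxE /= ?mul0r ?mulr0 ?add0r ?addr0 ?mul1r ?mulr1 in e221.
have e222 := E o2 o2 o2; rewrite !mxE !sum5 !mxE /= ?mul0r ?mulr0 ?add0r ?addr0 ?mul1r ?mulr1 in e222.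
have e223 := E o2 o2 o3; rewrite !mxE !sum5 !mxE /= ?mul0r ?mulr0 ?add0r ?addr0 ?mul1r ?mulr1 in e223.
have e224 := E o2 o2 o4; rewrite !mxE !sum5 !mxE /= ?mul0r ?mulr0 ?add0r ?addr0 ?mul1r ?mulr1 in e224.
have e230 := E o2 o3 o0; rewrite !mxE !sum5 !mxE /= ?mul0r ?mulr0 ?add0r ?addr0 ?mul1r ?mulr1 in e230.
have e231 := E o2 o3 o1; rewrite !mxE !sum5 !mxE /= ?mul0r ?mulr0 ?add0r ?addr0 ?mul1r ?mulr1 in e231.
have e232 := E o2 o3 o2; rewrite !mxE !sum5 !mxE /= ?mul0r ?mulr0 ?add0r ?addr0 ?mul1r ?mulr1 in e232.
have e233 := E o2 o3 o3; rewrite !mxE !sum5 !mxE /= ?mul0r ?mulr0 ?add0r ?addr0 ?mul1r ?mulr1 in e233.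
have e234 := E o2 o3 o4; rewrite !mxE !sum5 !mxE /= ?mul0r ?mulr0 ?add0r ?addr0 ?mul1r ?mulr1 in e234.
have e240 := E o2 o4 o0; rewrite !mxE !sum5 !mxE /= ?mul0r ?mulr0 ?add0r ?addr0 ?mul1r ?mulr1 in e240.
have e241 := E o2 o4 o1; rewrite !mxE !sum5 !mxE /= ?mul0r ?mulr0 ?add0r ?addr0 ?mul1r ?mulr1 in e241.
have e242 := E o2 o4 o2; rewrite !mxE !sum5 !mxE /= ?mul0r ?mulr0 ?add0r ?addr0 ?mul1r ?mulr1 in e242.
have e243 := E o2 o4 o3; rewrite !mxE !sum5 !mxE /= ?mul0r ?mulr0 ?add0r ?addr0 ?mul1r ?mulr1 in e243.
have e244 := E o2 o4 o4; rewrite !mxE !sum5 !mxE /= ?mul0r ?mulr0 ?add0r ?addr0 ?mul1r ?mulr1 in e244.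
have e300 := E o3 o0 o0; rewrite !mxE !sum5 !mxE /= ?mul0r ?mulr0 ?add0r ?addr0 ?mul1r ?mulr1 in e300.
have e301 := E o3 o0 o1; rewrite !mxE !sum5 !mxE /= ?mul0r ?mulr0 ?add0r ?addr0 ?mul1r ?mulr1 in e301.
have e302 := E o3 o0 o2; rewrite !mxE !sum5 !mxE /= ?mul0r ?mulr0 ?add0r ?addr0 ?mul1r ?mulr1 in e302.
have e303 := E o3 o0 o3; rewrite !mxE !sum5 !mxE /= ?mul0r ?mulr0 ?add0r ?addr0 ?mul1r ?mulr1 in e303.
have e304 := E o3 o0 o4; rewrite !mxE !sum5 !mxE /= ?mul0r ?mulr0 ?add0r ?addr0 ?mul1r ?mulr1 in e304.
have e310 := E o3 o1 o0; rewrite !mxE !sum5 !mxE /= ?mul0r ?mulr0 ?add0r ?addr0 ?mul1r ?mulr1 in e310.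
have e311 := E o3 o1 o1; rewrite !mxE !sum5 !mxE /= ?mul0r ?mulr0 ?add0r ?addr0 ?mul1r ?mulr1 in e311.
have e312 := E o3 o1 o2; rewrite !mxE !sum5 !mxE /= ?mul0r ?mulr0 ?add0r ?addr0 ?mul1r ?mulr1 in e312.
have e313 := E o3 o1 o3; rewrite !mxE !sum5 !mxE /= ?mul0r ?mulr0 ?add0r ?addr0 ?mul1r ?mulr1 in e313.
have e314 := E o3 o1 o4; rewrite !mxE !sum5 !mxE /= ?mul0r ?mulr0 ?add0r ?addr0 ?mul1r ?mulr1 in e314.
have e320 := E o3 o2 o0; rewrite !mxE !sum5 !mxE /= ?mul0r ?mulr0 ?add0r ?addr0 ?mul1r ?mulr1 in e320.
have e321 := E o3 o2 o1; rewrite !mxE !sum5 !mxE /= ?mul0r ?mulr0 ?add0r ?addr0 ?mul1r ?mulr1 in e321.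
have e322 := E o3 o2 o2; rewrite !mxE !sum5 !mxE /= ?mul0r ?mulr0 ?add0r ?addr0 ?mul1r ?mulr1 in e322.
have e323 := E o3 o2 o3; rewrite !mxE !sum5 !mxE /= ?mul0r ?mulr0 ?add0r ?addr0 ?mul1r ?mulr1 in e323.
have e324 := E o3 o2 o4; rewrite !mxE !sum5 !mxE /= ?mul0r ?mulr0 ?add0r ?addr0 ?mul1r ?mulr1 in e324.
have e330 := E o3 o3 o0; rewrite !mxE !sum5 !mxE /= ?mul0r ?mulr0 ?add0r ?addr0 ?mul1r ?mulr1 in e330.
have e331 := E o3 o3 o1; rewrite !mxE !sum5 !mxE /= ?mul0r ?mulr0 ?add0r ?addr0 ?mul1r ?mulr1 in e331.
have e332 := E o3 o3 o2; rewrite !mxE !sum5 !mxE /= ?mul0r ?mulr0 ?add0r ?addr0 ?mul1r ?mulr1 in e332.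
have e333 := E o3 o3 o3; rewrite !mxE !sum5 !mxE /= ?mul0r ?mulr0 ?add0r ?addr0 ?mul1r ?mulr1 in e333.
have e334 := E o3 o3 o4; rewrite !mxE !sum5 !mxE /= ?mul0r ?mulr0 ?add0r ?addr0 ?mul1r ?mulr1 in e334.
have e340 := E o3 o4 o0; rewrite !mxE !sum5 !mxE /= ?mul0r ?mulr0 ?add0r ?addr0 ?mul1r ?mulr1 in e340.
have e341 := E o3 o4 o1; rewrite !mxE !sum5 !mxE /= ?mul0r ?mulr0 ?add0r ?addr0 ?mul1r ?mulr1 in e341.
have e342 := E o3 o4 o2; rewrite !mxE !sum5 !mxE /= ?mul0r ?mulr0 ?add0r ?addr0 ?mul1r ?mulr1 in e342.
have e343 := E o3 o4 o3; rewrite !mxE !sum5 !mxE /= ?mul0r ?mulr0 ?add0r ?addr0 ?mul1r ?mulr1 in e343.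
have e344 := E o3 o4 o4; rewrite !mxE !sum5 !mxE /= ?mul0r ?mulr0 ?add0r ?addr0 ?mul1r ?mulr1 in e344.
have e400 := E o4 o0 o0; rewrite !mxE !sum5 !mxE /= ?mul0r ?mulr0 ?add0r ?addr0 ?mul1r ?mulr1 in e400.
have e401 := E o4 o0 o1; rewrite !mxE !sum5 !mxE /= ?mul0r ?mulr0 ?add0r ?addr0 ?mul1r ?mulr1 in e401.
have e402 := E o4 o0 o2; rewrite !mxE !sum5 !mxE /= ?mul0r ?mulr0 ?add0r ?addr0 ?mul1r ?mulr1 in e402.
have e403 := E o4 o0 o3; rewrite !mxE !sum5 !mxE /= ?mul0r ?mulr0 ?add0r ?addr0 ?mul1r ?mulr1 in e403.
have e404 := E o4 o0 o4; rewrite !mxE !sum5 !mxE /= ?mul0r ?mulr0 ?add0r ?addr0 ?mul1r ?mulr1 in e404.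
have e410 := E o4 o1 o0; rewrite !mxE !sum5 !mxE /= ?mul0r ?mulr0 ?add0r ?addr0 ?mul1r ?mulr1 in e410.
have e411 := E o4 o1 o1; rewrite !mxE !sum5 !mxE /= ?mul0r ?mulr0 ?add0r ?addr0 ?mul1r ?mulr1 in e411.
have e412 := E o4 o1 o2; rewrite !mxE !sum5 !mxE /= ?mul0r ?mulr0 ?add0r ?addr0 ?mul1r ?mulr1 in e412.
have e413 := E o4 o1 o3; rewrite !mxE !sum5 !mxE /= ?mul0r ?mulr0 ?add0r ?addr0 ?mul1r ?mulr1 in e413.
have e414 := E o4 o1 o4; rewrite !mxE !sum5 !mxE /= ?mul0r ?mulr0 ?add0r ?addr0 ?mul1r ?mulr1 in e414.
have e420 := E o4 o2 o0; rewrite !mxE !sum5 !mxE /= ?mul0r ?mulr0 ?add0r ?addr0 ?mul1r ?mulr1 in e420.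
have e421 := E o4 o2 o1; rewrite !mxE !sum5 !mxE /= ?mul0r ?mulr0 ?add0r ?addr0 ?mul1r ?mulr1 in e421.
have e422 := E o4 o2 o2; rewrite !mxE !sum5 !mxE /= ?mul0r ?mulr0 ?add0r ?addr0 ?mul1r ?mulr1 in e422.
have e423 := E o4 o2 o3; rewrite !mxE !sum5 !mxE /= ?mul0r ?mulr0 ?add0r ?addr0 ?mul1r ?mulr1 in e423.
have e424 := E o4 o2 o4; rewrite !mxE !sum5 !mxE /= ?mul0r ?mulr0 ?add0r ?addr0 ?mul1r ?mulr1 in e424.
have e430 := E o4 o3 o0; rewrite !mxE !sum5 !mxE /= ?mul0r ?mulr0 ?add0r ?addr0 ?mul1r ?mulr1 in e430.
have e431 := E o4 o3 o1; rewrite !mxE !sum5 !mxE /= ?mul0r ?mulr0 ?add0r ?addr0 ?mul1r ?mulr1 in e431.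
have e432 := E o4 o3 o2; rewrite !mxE !sum5 !mxE /= ?mul0r ?mulr0 ?add0r ?addr0 ?mul1r ?mulr1 in e432.
have e433 := E o4 o3 o3; rewrite !mxE !sum5 !mxE /= ?mul0r ?mulr0 ?add0r ?addr0 ?mul1r ?mulr1 in e433.
have e434 := E o4 o3 o4; rewrite !mxE !sum5 !mxE /= ?mul0r ?mulr0 ?add0r ?addr0 ?mul1r ?mulr1 in e434.
have e440 := E o4 o4 o0; rewrite !mxE !sum5 !mxE /= ?mul0r ?mulr0 ?add0r ?addr0 ?mul1r ?mulr1 in e440.
have e441 := E o4 o4 o1; rewrite !mxE !sum5 !mxE /= ?mul0r ?mulr0 ?add0r ?addr0 ?mul1r ?mulr1 in e441.
have e442 := E o4 o4 o2; rewrite !mxE !sum5 !mxE /= ?mul0r ?mulr0 ?add0r ?addr0 ?mul1r ?mulr1 in e442.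
have e443 := E o4 o4 o3; rewrite !mxE !sum5 !mxE /= ?mul0r ?mulr0 ?add0r ?addr0 ?mul1r ?mulr1 in e443.
have e444 := E o4 o4 o4; rewrite !mxE !sum5 !mxE /= ?mul0r ?mulr0 ?add0r ?addr0 ?mul1r ?mulr1 in e444.
clear E H.
case: hq => hq; subst q.
- have f30 : A o3 o0 = 0 by clear -e010; lra.
  have f31 : A o3 o1 = 0 by clear -e011; lra.
  have f20 : A o2 o0 = 0 by clear -e020; lra.
  have f21 : A o2 o1 = 0 by clear -e021; lra.
  have f40 : A o4 o0 = 0 by clear -e040; lra.
  have f41 : A o4 o1 = 0 by clear -e041; lra.
  have f02 : A o0 o2 = 0 by clear -e100; lra.
  have f03 : A o0 o3 = 0 by clear -e101; lra.
  have f12 : A o1 o2 = 0 by clear -e110; lra.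
  have f13 : A o1 o3 = 0 by clear -e111; lra.
  have f22 : A o2 o2 = A o0 o0 by clear -e120 f20; lra.
  have f42 : A o4 o2 = 0 by clear -e132 f12; lra.
  have f43 : A o4 o3 = 0 by clear -e133 f13; lra.
  have f10 : A o1 o0 = 0 by clear -e200 f20; lra.
  have f14 : A o1 o4 = 0 by clear -e213; lra.
  have f24 : A o2 o4 = 0 by clear -e223; lra.
  have f34 : A o3 o4 = 0 by clear -e233; lra.
  have f32 : A o3 o2 = 0 by clear -e242 f40 f42; lra.
  have f01 : A o0 o1 = 0 by clear -e300; lra.
  have f11 : A o1 o1 = A o0 o0 by clear -e310 f10; lra.
  have f04 : A o0 o4 = 0 by clear -e314 f14 f13; lra.
  have f23 : A o2 o3 = 0 by clear -e322; lra.
  have f33 : A o3 o3 = A o0 o0 by clear -e332 f22 f32 f42; lra.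
  have f44 : A o4 o4 = A o0 o0 by clear -e334 f24 f34 f33; lra.
  apply/matrixP => a b; rewrite mxE.
  case: (ord5 a) => [->|[->|[->|[->|->]]]]; case: (ord5 b) => [->|[->|[->|[->|->]]]]; rewrite ?(f01, f02, f03, f04, f10, f11, f12, f13, f14, f20, f21, f22, f23, f24, f30, f31, f32, f33, f34, f40, f41, f42, f43, f44) /= ?mulr1n ?mulr0n //.
- have f30 : A o3 o0 = 0 by clear -e010; lra.
  have f31 : A o3 o1 = 0 by clear -e011; lra.
  have f20 : A o2 o0 = 0 by clear -e022; lra.
  have f21 : A o2 o1 = 0 by clear -e023; lra.
  have f40 : A o4 o0 = 0 by clear -e042; lra.
  have f41 : A o4 o1 = 0 by clear -e043; lra.
  have f02 : A o0 o2 = 0 by clear -e100; lra.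
  have f03 : A o0 o3 = 0 by clear -e101; lra.
  have f12 : A o1 o2 = 0 by clear -e110; lra.
  have f13 : A o1 o3 = 0 by clear -e111; lra.
  have f22 : A o2 o2 = A o0 o0 by clear -e120; lra.
  have f42 : A o4 o2 = 0 by clear -e132 f12; lra.
  have f43 : A o4 o3 = 0 by clear -e133 f13; lra.
  have f10 : A o1 o0 = 0 by clear -e200 f20; lra.
  have f11 : A o1 o1 = A o0 o0 by clear -e201 f21; lra.
  have f14 : A o1 o4 = 0 by clear -e213; lra.
  have f24 : A o2 o4 = 0 by clear -e223; lra.
  have f34 : A o3 o4 = 0 by clear -e233; lra.
  have f32 : A o3 o2 = 0 by clear -e242 f40; lra.
  have f01 : A o0 o1 = 0 by clear -e300; lra.
  have f04 : A o0 o4 = 0 by clear -e314 f13; lra.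
  have f23 : A o2 o3 = 0 by clear -e322; lra.
  have f33 : A o3 o3 = A o0 o0 by clear -e332 f22 f42; lra.
  have f44 : A o4 o4 = A o0 o0 by clear -e334 f24 f33; lra.
  apply/matrixP => a b; rewrite mxE.
  case: (ord5 a) => [->|[->|[->|[->|->]]]]; case: (ord5 b) => [->|[->|[->|[->|->]]]]; rewrite ?(f01, f02, f03, f04, f10, f11, f12, f13, f14, f20, f21, f22, f23, f24, f30, f31, f32, f33, f34, f40, f41, f42, f43, f44) /= ?mulr1n ?mulr0n //.
Qed.

Lemma gen_inv (q : rat) i : q = 1 \/ q = -1 ->
  (1%:M + jU q i) *m (q *: (q%:M + jU q i)) = 1%:M.
Proof.
move=> hq; apply/matrixP => a b; rewrite !mxE sum5 !mxE.
case: hq => ->; case: (ord5 i) => [->|[->|[->|[->|->]]]];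
  case: (ord5 a) => [->|[->|[->|[->|->]]]]; case: (ord5 b) => [->|[->|[->|[->|->]]]];
  rewrite /= ?mxE /= ?mulr1n ?mulr0n; ring.
Qed.

Lemma act_comm eps A i : eps = 1 \/ eps = -1 ->
  act eps [:: (i, true)] A = A -> jU eps i *m A = A *m jU eps i.
Proof.
move=> heps H.
have e2 : eps * eps = 1 by case: heps => ->; ring.
have e3 : eps ^+ 3 = eps by rewrite !exprS expr0 mulr1 mulrA e2 mul1r.
have e5 : eps ^+ 5 = eps by rewrite !exprS expr0 mulr1 !mulrA e2 mul1r e2 mul1r.
have e2' : eps ^+ 2 = 1 by rewrite expr2.
move: H; rewrite /act /rho_eps /winv /= /jones_gen /= e3 e5 e2' !mulmx1 scale1r.
set U := jU eps i => H.
have Hi := gen_inv i heps; rewrite -/U in Hi.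
set G := eps *: (eps%:M + U) in H Hi.
have HG : G *m A = A *m G.
  by rewrite -[G *m A]mulmx1 -Hi !mulmxA H.
have GE : G = 1%:M + eps *: U by rewrite /G scalerDr scale_scalar_mx e2.
move: HG; rewrite GE mulmxDl mulmxDr mul1mx mulmx1 => /addrI.
rewrite -scalemxAl -scalemxAr => /(congr1 (fun X => eps *: X)).
by rewrite !scalerA e2 !scale1r.
Qed.



Lemma fact_neq0 n : (n`!)%:R != 0 :> rat.
Proof. by rewrite pnatr_eq0 -lt0n fact_gt0. Qed.

Lemma expS_prod N j : (j < N)%N -> (expS N 1 * expS N (-1))`_j = (j == 0%N)%:R.
Proof.
move=> hj; rewrite coefM.
under eq_bigr => i _ do rewrite !coef_poly (leq_ltn_trans (leq_ord i) hj) (leq_ltn_trans (leq_subr i j) hj) expr1n.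
case: j hj => [|n] hj.
  by rewrite big_ord1 /= subnn expr0 fact0 divr1 mulr1.
have H : (-1 + 1 : rat) ^+ n.+1 = 0 by rewrite addNr expr0n.
rewrite exprDn in H; rewrite /=.
transitivity (((n.+1)`!%:R : rat)^-1 * \sum_(i < n.+2) (-1) ^+ (n.+1 - i) * 1 ^+ i *+ 'C(n.+1, i)); last by rewrite H mulr0.
rewrite mulr_sumr.
apply: eq_bigr => i _.
have hb := bin_fact (leq_ord i).
rewrite -hb natrM natrM expr1n mulr1 -mulr_natr.
have h1 := fact_neq0 i; have h2 := fact_neq0 (n.+1 - i).
have h3 : ('C(n.+1, i))%:R != 0 :> rat by rewrite pnatr_eq0 -lt0n bin_gt0 (leq_ord i).
field; rewrite ?h1 ?h2 ?h3 //.
Qed.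



Lemma pcong_coef N p q j : pcong N p q -> (j < N)%N -> p`_j = q`_j.
Proof. by move=> h hj; apply/eqP; rewrite -subr_eq0 -coefB h. Qed.

Lemma mcong_trans N A B C : mcong N A B -> mcong N B C -> mcong N A C.
Proof. by move=> h1 h2 a b; apply: pcong_trans (h1 a b) (h2 a b). Qed.

Lemma expS_cong k c : pcong k (expS k.+1 c) (expS k c).
Proof.
move=> j hj; rewrite coefB !coef_poly hj (ltn_trans hj (ltnSn k)) subrr //.
Qed.

Lemma phi_cong eps k w : mcong k (phiN eps k.+1 w) (phiN eps k w).
Proof. by apply: mcong_word; apply: pcongMc; apply: expS_cong. Qed.

Lemma tr_Delta eps k x : eps = 1 \/ eps = -1 -> (1 <= k)%N -> inF eps k x ->
  \tr (Delta eps k x) = 0.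
Proof.
move=> heps hk [_ hx].
set M := phiN eps k.+1 x.
have hM1 : mcong k M 1.
  apply: mcong_trans (@phi_cong eps k x) _ => a b j hj.
  by rewrite coefB (hx a b j hj) subrr.
have e2 : eps * eps = 1 by case: heps => ->; ring.
have hu : pcong k.+1 ((eps%:P * expS k.+1 1) * (eps%:P * expS k.+1 (-1))) 1.
  move=> j hj.
  rewrite (_ : _ * _ = expS k.+1 1 * expS k.+1 (-1)); last first.
    by rewrite mulrACA -polyCM e2 mul1r.
  by rewrite coefB expS_prod // coef1 subrr.
have [m hm] := @det_word _ (eps%:P * expS k.+1 1) (eps%:P * expS k.+1 (-1)) x.
have hdet : pcong k.+1 (\det M) 1.
  by rewrite /M /phiN hm; have := pcongX m hu; rewrite expr1n.
have hdc := det_cong hM1.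
have c1 := pcong_coef hdet (ltnSn k).
have c2 := pcong_coef hdc (_ : (k < k + k)%N); rewrite c1 coef1 in c2.
have hk0 : (k == 0%N) = false by case: k hk {hx hM1 hdet hdc c1 c2 M hu hm}.
rewrite hk0 coefD coef1 hk0 add0r coef_sum in c2.
rewrite /mxtrace; under eq_bigr do rewrite mxE.
have {}c2 := c2 ltac:(lia); rewrite /= in c2.
rewrite -/M; apply: (etrans _ (esym c2)); apply: eq_bigr => a _; rewrite coefB coef1 hk0 subr0 //.
Qed.



Theorem mainTheorem2 (eps : rat) (heps : eps = 1 \/ eps = -1)
  (k : nat) (hk : (1 <= k)%N) :
  ~ has_trivial_summand eps (GkF eps k).
Proof.
move=> [A [hA0 [n [c [x [hx hA]]]] hfix _]].
have htr : \tr A = 0.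
  rewrite hA raddf_sum big1 // => i _.
  by rewrite /= mxtraceZ tr_Delta // mulr0.
have hsc : A = (A o0 o0)%:M.
  apply: (commut_scalar heps) => i; apply: act_comm => //; exact: hfix.
move: htr; rewrite hsc mxtrace_scalar => /eqP.
rewrite mulrn_eq0 /= => /eqP h0.
by move: hA0; rewrite hsc h0 raddf0 eqxx.
Qed.
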